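(* Let $\ell\ge2$ and $k\ge0$ be integers, and let $\lambda$ be an $\ell$-core with $\lambda_1=k$. Write $\mathbf{a}=(a_1,\ldots,a_\ell)=\pi_\ell^{-1}(\lambda)$ and let $(k\bmod\ell)$ denote the unique integer in $\{1,\ldots,\ell\}$ congruent to $k$ modulo $\ell$. Then \[ a_{(k\bmod\ell)}=\left\lceil \frac{k}{\ell}\right\rceil, \] i.e. $\pi_\ell^{-1}(\lambda)$ lies in the affine hyperplane $H_\ell^k=\{\mathbf{a}\in\mathbf{R}^\ell:\sum_j a_j=0,\ a_{(k\bmod\ell)}=\lceil k/\ell\rceil\}$.
   Context: A partition is an $\ell$-core if none of its hook lengths is divisible by $\ell$ (the hook length of a box is the number of boxes weakly to its right in its row plus the number strictly below it in its column). For $\mathbf{a}\in\mathbf{Z}^\ell$ with $\sum a_j=0$, let $X(\mathbf{a})=\{r\ell+(j-1):1\le j\le\ell,\ r\in\mathbf{Z},\ r\le a_j\}$ and let $\pi_\ell(\mathbf{a})$ be the partition whose nonzero parts are the positive values of $\#\{y\in\mathbf{Z}\setminus X(\mathbf{a}):y<x\}$, $x\in X(\mathbf{a})$. It is known that $\pi_\ell$ is a bijection from $\{\mathbf{a}\in\mathbf{Z}^\ell:\sum a_j=0\}$ onto the set of $\ell$-cores. $\lambda_1$ is the largest part ($0$ for the empty partition). *)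

(* Defs.v *)
From mathcomp Require Import all_boot all_order all_algebra.
Set Implicit Arguments. Unset Strict Implicit. Unset Printing Implicit Defensive.
Import Order.TTheory GRing.Theory Num.Theory.
Local Open Scope ring_scope.

Definition is_partition (lam : seq nat) : bool :=
  sorted geq lam && all (fun p => (0 < p)%N) lam.

Definition largest_part (lam : seq nat) : nat := nth 0%N lam 0.

(* Hook length of the box in row i, column j (0-indexed):
   boxes weakly to its right in its row, plus boxes strictly below it in its column. *)
Definition hook_length (lam : seq nat) (i j : nat) : nat :=
  (nth 0%N lam i - j) + (count (fun p => (j < p)%N) lam - i.+1).

Definition is_box (lam : seq nat) (i j : nat) : bool :=
  (i < size lam)%N && (j < nth 0%N lam i)%N.

Definition is_core (l : nat) (lam : seq nat) : bool :=
  all (fun i => all (fun j => ~~ (l %| hook_length lam i j)%N)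
                    (iota 0 (nth 0%N lam i))) (iota 0 (size lam)).

(* X(a) for a = (a_1,...,a_l), stored 0-indexed: a j = a_{j+1} for j : 'I_l.
   y \in X(a) iff y = r*l + j (0 <= j < l, i.e. j = (index) - 1) with r <= a j. *)
Definition inX (l : nat) (a : 'I_l -> int) (y : int) : bool :=
  [exists j : 'I_l, (((y - j%:Z) %% l%:Z)%Z == 0) && (((y - j%:Z) %/ l%:Z)%Z <= a j)].

(* A window of integers outside of which nothing relevant happens:
   with B = 1 + sum |a_j|, every y < -B*l lies in X(a), and no y >= B*l does. *)
Definition bound (l : nat) (a : 'I_l -> int) : nat := (\sum_(j < l) `|a j|).+1.

Definition window (l : nat) (a : 'I_l -> int) : seq int :=
  [seq (i%:Z - (bound a * l)%:Z) | i <- iota 0 (2 * bound a * l)].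

(* #{ y in Z \ X(a) : y < x } (the y below the window are all in X(a)). *)
Definition gaps_below (l : nat) (a : 'I_l -> int) (x : int) : nat :=
  count (fun y => (y < x) && ~~ inX a y) (window a).

Definition pi_l (l : nat) (a : 'I_l -> int) : seq nat :=
  sort geq [seq n <- [seq gaps_below a x | x <- window a & inX a x] | (0 < n)%N].

Definition ceil_div (k l : nat) : nat := (k + l.-1) %/ l.

(* Main.v *)
Require Import Defs.
From mathcomp Require Import all_boot all_order all_algebra zify.
Import Order.TTheory GRing.Theory Num.Theory.
Local Open Scope ring_scope.

Lemma lt_lin (x y : int) (i j l : nat) : (i < l)%N -> (j < l)%N ->
  (x * l%:Z + i%:Z < y * l%:Z + j%:Z) = (x < y) || ((x == y) && (i < j)%N).
Proof.
move=> hi hj.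
case: (ltgtP x y) => h /=.
- apply/idP; nia.
- apply/negbTE; nia.
- subst; lia.
Qed.

Lemma inX_char (l : nat) (a : 'I_l -> int) (r : int) (i : 'I_l) :
  inX a (r * l%:Z + i%:Z) = (r <= a i).
Proof.
apply/existsP/idP.
- case=> j /andP [/eqP hm hd].
  have hij : i = j.
    move: hm; rewrite -addrA modzMDl => /dvdz_mod0P; rewrite dvdzE => hd2.
    apply: val_inj => /=.
    have hi := ltn_ord i; have hj := ltn_ord j.
    case E: (`|i%:Z - j%:Z|%N) => [|n].
      lia.
    have h0 : (0 < `|i%:Z - j%:Z|)%N by rewrite E.
    have := dvdn_leq h0 hd2; lia.
  by subst; move: hd; rewrite addrK mulzK //; have := ltn_ord j; lia.
- move=> h; exists i; rewrite addrK modzMl mulzK ?eqxx ?h //.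
  have := ltn_ord i; lia.
Qed.

Lemma inX_le (l : nat) (a : 'I_l -> int) (x : int) :
  inX a x -> exists j : 'I_l, x <= a j * l%:Z + j%:Z.
Proof.
case/existsP=> j /andP [/eqP hm hd]; exists j.
have := divz_eq (x - j%:Z) l%:Z; rewrite hm addr0 => e.
have : x = ((x - j%:Z) %/ l%:Z)%Z * l%:Z + j%:Z by rewrite -e; lia.
move=> ->; nia.
Qed.

Lemma count_iota_sum (q : pred nat) s n :
  count q (iota s n) = (\sum_(i < n) q (s + i)%N)%N.
Proof.
elim: n => [|n IH]; first by rewrite big_ord0.
have -> : iota s n.+1 = iota s n ++ [:: s + n]%N by rewrite -addn1 iotaD.
by rewrite count_cat IH big_ord_recr /= addn0.
Qed.

Lemma count_iota_blocks (q : pred nat) N l :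
  count q (iota 0 (N * l)) =
  (\sum_(i < l) count (fun r => q (r * l + i)%N) (iota 0 N))%N.
Proof.
elim: N => [|N IH]; first by rewrite mul0n big1.
have -> : iota 0 N.+1 = iota 0 N ++ [:: N] by rewrite -addn1 iotaD.
rewrite mulSnr iotaD count_cat IH count_iota_sum add0n -big_split /=.
apply: eq_bigr => i _.
by rewrite count_cat /= addn0.
Qed.

Lemma count_interval lo hi N :
  count (fun r => (lo < r)%N && (r <= hi)%N) (iota 0 N) =
  (minn hi.+1 N - minn lo.+1 N)%N.
Proof.
elim: N => [|N IH]; first by rewrite !minn0.
have -> : iota 0 N.+1 = iota 0 N ++ [:: N] by rewrite -addn1 iotaD.
rewrite count_cat IH /= addn0.
case: ((lo < N)%N && (N <= hi)%N) /andP => h /=; lia.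
Qed.

Lemma sum_gt J n : (\sum_(i < n) (J < i)%N)%N = (n - J.+1)%N.
Proof.
elim: n => [|n IH]; first by rewrite big_ord0.
rewrite big_ord_recr /= IH; case: (ltnP J n) => /= h; lia.
Qed.

Lemma head_sort_max (s : seq nat) g : g \in s -> (forall x, x \in s -> (x <= g)%N) ->
  nth 0%N (sort geq s) 0 = g.
Proof.
move=> gs hle.
have srt : sorted geq (sort geq s) by apply: sort_sorted => x y; apply: leq_total.
case E: (sort geq s) srt => [|h t] /= srt.
  by move: gs; rewrite -(mem_sort geq) E.
have hs : h \in s by rewrite -(mem_sort geq) E mem_head.
have := order_path_min _ srt.
have tr : transitive geq by move=> x y z /= h1 h2; apply: leq_trans h2 h1.
move=> /(_ tr) /allP ha.
move: gs; rewrite -(mem_sort geq) E inE => /orP [/eqP -> // | gt].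
have := ha _ gt; have := hle _ hs => /= ??; apply/eqP; rewrite eqn_leq; apply/andP; split => //.
Qed.

Theorem mainTheorem8 (l k : nat) (lam : seq nat) (a : 'I_l -> int) :
  (2 <= l)%N ->
  is_partition lam -> is_core l lam -> largest_part lam = k ->
  \sum_(j < l) a j = 0 -> pi_l a = lam ->
  forall j : 'I_l, (j : nat) = ((k + l - 1) %% l)%N ->
  a j = (ceil_div k l)%:Z.
Proof.
move=> hl _ _ hk hsum hpi j hj.
have l0 : (0 < l)%N by lia.
pose i0 := Ordinal l0.
case: (@arg_maxP _ _ _ i0 xpredT (fun i : 'I_l => a i * l%:Z + i%:Z) isT) => J _ HJ.
set m := a J * l%:Z + J%:Z.
set B := bound a.
have hB : forall i, (`|a i| < B)%N.
  by move=> i; rewrite /B /bound (bigD1 i) //=; lia.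
have mwin : m \in window a.
  rewrite /window; apply/mapP; exists (absz (m + (B * l)%N%:Z)).
    rewrite mem_iota; have := hB J; have := ltn_ord J; rewrite /m; nia.
  have := hB J; have := ltn_ord J; rewrite /m; nia.
have mX : inX a m by rewrite /m inX_char.
have gmax : forall x, x \in window a -> inX a x -> (gaps_below a x <= gaps_below a m)%N.
  move=> x _ /inX_le [j' hj'].
  have xm : x <= m by move: (HJ j' isT) => /= ?; rewrite /m; lia.
  rewrite /gaps_below; apply: sub_count => y /= /andP [h1 h2]; rewrite h2 andbT; lia.
have hk' : k = gaps_below a m.
  rewrite -hk -hpi /largest_part /pi_l.
  set s := [seq gaps_below a x | x <- window a & inX a x].
  have gs : gaps_below a m \in s by apply: map_f; rewrite mem_filter mX mwin.
  have sle : forall x, x \in s -> (x <= gaps_below a m)%N.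
    by move=> x /mapP [y]; rewrite mem_filter => /andP [h1 h2] ->; apply: gmax.
  case: (posnP (gaps_below a m)) => g0.
  - rewrite g0. case E: [seq n <- s | (0 < n)%N] => [|x t] //.
    have : x \in [seq n <- s | (0 < n)%N] by rewrite E mem_head.
    rewrite mem_filter => /andP [h1 h2]; have := sle _ h2; lia.
  - apply: head_sort_max; first by rewrite mem_filter g0 gs.
    by move=> x; rewrite mem_filter => /andP [_ /sle].
pose N := (2 * B)%N.
pose lo := fun i : 'I_l => absz (a i + B%:Z).
pose hi := fun i : 'I_l => (absz (a J + B%:Z)%R - (J <= i))%N.
pose d := fun i : 'I_l => (minn (hi i).+1 N - minn (lo i).+1 N)%N.
have hgd : gaps_below a m = (\sum_(i < l) d i)%N.
  rewrite /gaps_below /window count_map count_iota_blocks.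
  apply: eq_bigr => i _; rewrite /d -count_interval; apply: eq_count => r /=.
  have -> : ((r * l + i)%N%:Z - (B * l)%N%:Z) = (r%:Z - B%:Z) * l%:Z + i%:Z by nia.
  rewrite inX_char /m lt_lin //.
  have := hB i; have := hB J; rewrite /lo /hi; lia.
have hid : forall i : 'I_l, (d i)%:Z + a i + (J < i)%N%:Z = a J.
  move=> i; have h1 : ~~ (a J * l%:Z + J%:Z < a i * l%:Z + i%:Z).
    by rewrite -leNgt; exact: HJ i isT.
  rewrite lt_lin // in h1.
  have := hB i; have := hB J; rewrite /d /lo /hi /N.
  case: (eqVneq i J) => [->|ne]; first lia.
  have ne2 : (i : nat) != J by apply: contra_neq ne; apply: val_inj.
  lia.
have hs : (gaps_below a m)%:Z + (l - J.+1)%N%:Z = a J * l%:Z.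
  have := (_ : \sum_(i < l) ((d i)%:Z + a i + (J < i)%N%:Z) = \sum_(i < l) a J).
  move=> /(_ (eq_bigr _ (fun i _ => hid i))).
  rewrite !big_split /= hsum sumr_const card_ord -mulr_natr natz.
  by rewrite -!(big_morph Posz PoszD (erefl (Posz 0))) sum_gt hgd addr0.
rewrite -hk' in hs.
have hJl := ltn_ord J.
have aJ0 : 0 <= a J by nia.
pose n := absz (a J).
have eaJ : a J = n%:Z by rewrite /n; lia.
rewrite eaJ in hs.
have ekn : (k + l - 1 = n * l + J)%N by nia.
have hjJ : j = J.
  by apply: val_inj; rewrite /= hj ekn modnMDl modn_small.
rewrite hjJ eaJ /ceil_div; congr Posz.
have -> : (k + l.-1 = n * l + J)%N by lia.
by rewrite divnMDl // divn_small // addn0.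
Qed.
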